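(* If $T\in L_{aut}(\mathcal B)$ is a shifted hyperbolic operator, then $\overline{B(T)}$ is an infinite-dimensional closed subspace of $\mathcal B$ and it coincides with the shifted subspace $\Sigma$.
   Context: $\mathcal B$ is a Banach space. $T$ is generalized hyperbolic if there is a decomposition $\mathcal B=E^-\oplus E^+$ into complementary closed subspaces with $T(E^+)\subset E^+$, $T^{-1}(E^-)\subset E^-$, and $T|_{E^+}$, $T^{-1}|_{E^-}$ uniform contractions. $T$ is shifted hyperbolic if it is generalized hyperbolic and the transition subspace $E_0:=E^-\cap T^{-1}(E^+)$ is nonzero. The shifted subspace $\Sigma$ is the smallest closed subspace containing $E_0$ that is invariant under $T$ and $T^{-1}$ (the closure of the span of $\bigcup_{n\in\mathbb Z}T^n(E_0)$). The bounded set $B(T)$ is the set of $x$ for which there exist $K>0$ and strictly increasing sequences of positive integers $(k_n),(m_n)$ with $|T^{k_n}x|<K$ and $|T^{-m_n}x|<K$. *)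

(* Defs.v *)
From Stdlib Require Import Reals ZArith.
Open Scope R_scope.

Record Banach := {
  bs :> Type;
  bzero : bs;
  badd : bs -> bs -> bs;
  bopp : bs -> bs;
  bscal : R -> bs -> bs;
  bnorm : bs -> R;
  badd_assoc : forall x y z, badd x (badd y z) = badd (badd x y) z;
  badd_comm : forall x y, badd x y = badd y x;
  badd_0l : forall x, badd bzero x = x;
  badd_oppl : forall x, badd (bopp x) x = bzero;
  bscal_assoc : forall a b x, bscal a (bscal b x) = bscal (a * b) x;
  bscal_1 : forall x, bscal 1 x = x;
  bscal_addv : forall a x y, bscal a (badd x y) = badd (bscal a x) (bscal a y);
  bscal_adds : forall a b x, bscal (a + b) x = badd (bscal a x) (bscal b x);
  bnorm_eq0 : forall x, bnorm x = 0 -> x = bzero;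
  bnorm_scal : forall a x, bnorm (bscal a x) = Rabs a * bnorm x;
  bnorm_triangle : forall x y, bnorm (badd x y) <= bnorm x + bnorm y;
  bcomplete : forall u : nat -> bs,
    (forall eps, 0 < eps -> exists N, forall m n, (N <= m)%nat -> (N <= n)%nat ->
        bnorm (badd (u m) (bopp (u n))) < eps) ->
    exists l, forall eps, 0 < eps -> exists N, forall n, (N <= n)%nat ->
        bnorm (badd (u n) (bopp l)) < eps
}.

Arguments bzero {_}.
Arguments badd {_}.
Arguments bopp {_}.
Arguments bscal {_}.
Arguments bnorm {_}.

Section Defs.
Variable X : Banach.

Definition bsub (x y : X) : X := badd x (bopp y).

Definition is_linear (T : X -> X) : Prop :=
  (forall x y, T (badd x y) = badd (T x) (T y)) /\
  (forall a x, T (bscal a x) = bscal a (T x)).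

Definition is_bounded (T : X -> X) : Prop :=
  exists M, forall x, bnorm (T x) <= M * bnorm x.

Definition in_Laut (T Tinv : X -> X) : Prop :=
  is_linear T /\ is_bounded T /\ is_linear Tinv /\ is_bounded Tinv /\
  (forall x, T (Tinv x) = x) /\ (forall x, Tinv (T x) = x).

Definition zpow (T Tinv : X -> X) (z : Z) : X -> X :=
  match z with
  | Z0 => fun x => x
  | Zpos p => Nat.iter (Pos.to_nat p) T
  | Zneg p => Nat.iter (Pos.to_nat p) Tinv
  end.

Definition is_subspace (S : X -> Prop) : Prop :=
  S bzero /\ (forall x y, S x -> S y -> S (badd x y)) /\
  (forall a x, S x -> S (bscal a x)).

Definition closure (S : X -> Prop) (x : X) : Prop :=
  forall eps, 0 < eps -> exists y, S y /\ bnorm (bsub x y) < eps.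

Definition is_closed (S : X -> Prop) : Prop := forall x, closure S x -> S x.

Definition is_closed_subspace (S : X -> Prop) : Prop :=
  is_subspace S /\ is_closed S.

Inductive span (S : X -> Prop) : X -> Prop :=
  | span_0 : span S bzero
  | span_in : forall x, S x -> span S x
  | span_add : forall x y, span S x -> span S y -> span S (badd x y)
  | span_scal : forall a x, span S x -> span S (bscal a x).

Fixpoint lincomb (c : nat -> R) (v : nat -> X) (n : nat) : X :=
  match n with
  | O => bzero
  | S k => badd (lincomb c v k) (bscal (c k) (v k))
  end.

Definition lin_indep (v : nat -> X) (n : nat) : Prop :=
  forall c : nat -> R, lincomb c v n = bzero -> forall i, (i < n)%nat -> c i = 0.

Definition infinite_dimensional (S : X -> Prop) : Prop :=
  forall n : nat, exists v : nat -> X,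
    (forall i, (i < n)%nat -> S (v i)) /\ lin_indep v n.

Definition uniform_contraction_on (T : X -> X) (E : X -> Prop) : Prop :=
  exists c, 0 <= c /\ c < 1 /\ forall x, E x -> bnorm (T x) <= c * bnorm x.

Definition generalized_hyperbolic_split (T Tinv : X -> X) (Em Ep : X -> Prop) : Prop :=
  is_closed_subspace Em /\ is_closed_subspace Ep /\
  (forall x, Em x -> Ep x -> x = bzero) /\
  (forall x, exists a b, Em a /\ Ep b /\ x = badd a b) /\
  (forall x, Ep x -> Ep (T x)) /\
  (forall x, Em x -> Em (Tinv x)) /\
  uniform_contraction_on T Ep /\
  uniform_contraction_on Tinv Em.

Definition E0 (T : X -> X) (Em Ep : X -> Prop) (x : X) : Prop :=
  Em x /\ Ep (T x).

Definition shifted_hyperbolic_split (T Tinv : X -> X) (Em Ep : X -> Prop) : Prop :=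
  generalized_hyperbolic_split T Tinv Em Ep /\
  exists x, E0 T Em Ep x /\ x <> bzero.

Definition shifted_hyperbolic (T Tinv : X -> X) : Prop :=
  exists Em Ep, shifted_hyperbolic_split T Tinv Em Ep.

Definition Sigma (T Tinv : X -> X) (Em Ep : X -> Prop) : X -> Prop :=
  closure (span (fun y => exists (n : Z) (x : X), E0 T Em Ep x /\ y = zpow T Tinv n x)).

Definition BT (T Tinv : X -> X) (x : X) : Prop :=
  exists K, 0 < K /\
  exists k m : nat -> nat,
    (forall n, (0 < k n)%nat) /\ (forall n, (k n < k (S n))%nat) /\
    (forall n, (0 < m n)%nat) /\ (forall n, (m n < m (S n))%nat) /\
    (forall n, bnorm (Nat.iter (k n) T x) < K) /\
    (forall n, bnorm (Nat.iter (m n) Tinv x) < K).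

End Defs.

(* Main.v *)
Require Import Defs.
From Stdlib Require Import Reals ZArith Lra Lia Classical ClassicalEpsilon.
Open Scope R_scope.

Arguments bsub {X}.
Arguments closure {X}.
Arguments span {X}.

Lemma add0r {X : Banach} (x : X) : badd x bzero = x.
Proof. rewrite badd_comm; apply badd_0l. Qed.
Lemma addrN {X : Banach} (x : X) : badd x (bopp x) = bzero.
Proof. rewrite badd_comm; apply badd_oppl. Qed.
Lemma addKr {X : Banach} (x y : X) : badd (bopp x) (badd x y) = y.
Proof. rewrite badd_assoc, badd_oppl; apply badd_0l. Qed.
Lemma addNKr {X : Banach} (x y : X) : badd x (badd (bopp x) y) = y.
Proof. rewrite badd_assoc, addrN; apply badd_0l. Qed.
Lemma addrK {X : Banach} (x y : X) : badd (badd y x) (bopp x) = y.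
Proof. rewrite <- badd_assoc, addrN; apply add0r. Qed.
Lemma addrNK {X : Banach} (x y : X) : badd (badd y (bopp x)) x = y.
Proof. rewrite <- badd_assoc, badd_oppl; apply add0r. Qed.
Lemma addr_inj {X : Banach} (x y z : X) : badd x y = badd x z -> y = z.
Proof. intros H. rewrite <- (addKr x y), H. apply addKr. Qed.
Lemma opp_uniq {X : Banach} (x y : X) : badd x y = bzero -> y = bopp x.
Proof. intros H. apply (addr_inj x). rewrite H, addrN; auto. Qed.
Lemma oppK {X : Banach} (x : X) : bopp (bopp x) = x.
Proof. symmetry. apply opp_uniq. apply badd_oppl. Qed.
Lemma opp0 {X : Banach} : bopp (@bzero X) = bzero.
Proof. symmetry. apply opp_uniq. apply add0r. Qed.
Lemma oppD {X : Banach} (x y : X) : bopp (badd x y) = badd (bopp x) (bopp y).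
Proof. symmetry. apply opp_uniq.
  rewrite (badd_comm _ (bopp x)), badd_assoc, <- (badd_assoc _ x y), addrN, add0r, addrN; auto. Qed.
Lemma scal0 {X : Banach} (x : X) : bscal 0 x = bzero.
Proof. apply (addr_inj (bscal 0 x)). rewrite <- bscal_adds, Rplus_0_r, add0r; auto. Qed.
Lemma scalv0 {X : Banach} (a : R) : bscal a (@bzero X) = bzero.
Proof. rewrite <- (scal0 bzero), bscal_assoc, Rmult_0_r; auto. Qed.
Lemma scalN1 {X : Banach} (x : X) : bscal (-1) x = bopp x.
Proof. apply opp_uniq. rewrite <- (bscal_1 _ x) at 1. rewrite <- bscal_adds.
  replace (1 + -1) with 0 by ring. apply scal0. Qed.
Lemma scalN {X : Banach} (a : R) (x : X) : bscal a (bopp x) = bopp (bscal a x).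
Proof. rewrite <- !scalN1, !bscal_assoc, Rmult_comm; auto. Qed.
Lemma scalNs {X : Banach} (a : R) (x : X) : bscal (- a) x = bopp (bscal a x).
Proof. rewrite <- !scalN1, !bscal_assoc. f_equal; ring. Qed.
Lemma norm0 {X : Banach} : bnorm (@bzero X) = 0.
Proof. rewrite <- (scal0 bzero), bnorm_scal, Rabs_R0; ring. Qed.
Lemma normN {X : Banach} (x : X) : bnorm (bopp x) = bnorm x.
Proof. rewrite <- scalN1, bnorm_scal. unfold Rabs; destruct Rcase_abs; lra. Qed.
Lemma norm_ge0 {X : Banach} (x : X) : 0 <= bnorm x.
Proof. pose proof (bnorm_triangle _ x (bopp x)). rewrite addrN, norm0, normN in H. lra. Qed.
Lemma bsubE {X : Banach} (x y : X) : bsub x y = badd x (bopp y).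
Proof. reflexivity. Qed.
Lemma dist_sym {X : Banach} (x y : X) : bnorm (bsub x y) = bnorm (bsub y x).
Proof. unfold bsub. rewrite <- normN, oppD, oppK, badd_comm; auto. Qed.
Lemma dist_tri {X : Banach} (x y z : X) : bnorm (bsub x z) <= bnorm (bsub x y) + bnorm (bsub y z).
Proof. unfold bsub. replace (badd x (bopp z)) with (badd (badd x (bopp y)) (badd y (bopp z))).
  apply bnorm_triangle. rewrite <- badd_assoc, addKr; auto. Qed.
Lemma sub0 {X : Banach} (x : X) : bsub x bzero = x.
Proof. unfold bsub; rewrite opp0; apply add0r. Qed.
Lemma subrr {X : Banach} (x : X) : bsub x x = bzero.
Proof. apply addrN. Qed.
Lemma sub_eq0 {X : Banach} (x y : X) : bsub x y = bzero -> x = y.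
Proof. unfold bsub; intros H. rewrite <- (addrNK y x), H. apply badd_0l. Qed.
Lemma sub_addadd {X : Banach} (a b c d : X) :
  bsub (badd a b) (badd c d) = badd (bsub a c) (bsub b d).
Proof. unfold bsub. rewrite oppD. rewrite <- !badd_assoc. f_equal.
  rewrite !badd_assoc. f_equal. apply badd_comm. Qed.
Lemma scal_sub {X : Banach} (a : R) (x y : X) : bscal a (bsub x y) = bsub (bscal a x) (bscal a y).
Proof. unfold bsub. rewrite bscal_addv, scalN; auto. Qed.
Lemma norm_sub_le {X : Banach} (x y : X) : bnorm x <= bnorm (bsub x y) + bnorm y.
Proof. replace x with (badd (bsub x y) y) at 1 by (unfold bsub; apply addrNK). apply bnorm_triangle. Qed.

Lemma cl_incl {X : Banach} (S : X -> Prop) x : S x -> closure S x.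
Proof. intros Hx eps He. exists x. split; auto. rewrite subrr, norm0; auto. Qed.
Lemma cl_mono {X : Banach} (S S' : X -> Prop) x :
  (forall y, S y -> S' y) -> closure S x -> closure S' x.
Proof. intros H Hx eps He. destruct (Hx eps He) as [y [Hy1 Hy2]]. exists y; auto. Qed.
Lemma cl_idem {X : Banach} (S : X -> Prop) x : closure (closure S) x -> closure S x.
Proof. intros Hx eps He. destruct (Hx (eps/2)) as [y [Hy1 Hy2]]. lra.
  destruct (Hy1 (eps/2)) as [z [Hz1 Hz2]]. lra. exists z; split; auto.
  pose proof (dist_tri x y z). lra. Qed.
Lemma cl_closed {X : Banach} (S : X -> Prop) : is_closed X (closure S).
Proof. intros x Hx. apply cl_idem; auto. Qed.
Lemma cl_add {X : Banach} (S : X -> Prop) x y :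
  (forall u v, S u -> S v -> S (badd u v)) -> closure S x -> closure S y -> closure S (badd x y).
Proof. intros H Hx Hy eps He. destruct (Hx (eps/2)) as [u [Hu1 Hu2]]. lra.
  destruct (Hy (eps/2)) as [v [Hv1 Hv2]]. lra. exists (badd u v). split; auto.
  rewrite sub_addadd. pose proof (bnorm_triangle _ (bsub x u) (bsub y v)). lra. Qed.
Lemma cl_scal {X : Banach} (S : X -> Prop) a x :
  (forall b u, S u -> S (bscal b u)) -> closure S x -> closure S (bscal a x).
Proof. intros H Hx eps He.
  assert (Ha : 0 < Rabs a + 1) by (pose proof (Rabs_pos a); lra).
  destruct (Hx (eps / (Rabs a + 1))) as [u [Hu1 Hu2]]. apply Rdiv_lt_0_compat; lra.
  exists (bscal a u). split; auto. rewrite <- scal_sub, bnorm_scal.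
  apply Rle_lt_trans with ((Rabs a + 1) * bnorm (bsub x u)).
  apply Rmult_le_compat_r. apply norm_ge0. lra.
  apply Rmult_lt_reg_l with (/ (Rabs a + 1)). apply Rinv_0_lt_compat; lra.
  rewrite <- Rmult_assoc, Rinv_l by lra. unfold Rdiv in Hu2. lra. Qed.
Lemma subspace_cl {X : Banach} (S : X -> Prop) : is_subspace X S -> is_subspace X (closure S).
Proof. intros [H0 [Ha Hs]]. split; [|split].
  apply cl_incl; auto. intros; apply cl_add; auto. intros; apply cl_scal; auto. Qed.
Lemma subspace_span {X : Banach} (G : X -> Prop) : is_subspace X (span G).
Proof. split; [apply span_0|split]; intros. apply span_add; auto. apply span_scal; auto. Qed.

Lemma iterS {A : Type} (f : A -> A) n x : Nat.iter (S n) f x = f (Nat.iter n f x).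
Proof. reflexivity. Qed.
Lemma lin0 {X : Banach} (T : X -> X) : is_linear X T -> T bzero = bzero.
Proof. intros [HA HS]. rewrite <- (scal0 bzero) at 1. rewrite HS, scal0; auto. Qed.
Lemma linN {X : Banach} (T : X -> X) x : is_linear X T -> T (bopp x) = bopp (T x).
Proof. intros [HA HS]. rewrite <- !scalN1, HS; auto. Qed.
Lemma linB {X : Banach} (T : X -> X) x y : is_linear X T -> T (bsub x y) = bsub (T x) (T y).
Proof. intros HL. unfold bsub. rewrite (proj1 HL), linN; auto. Qed.
Lemma iter_lin {X : Banach} (T : X -> X) n : is_linear X T -> is_linear X (Nat.iter n T).
Proof. intros [HA HS]. induction n as [|n [IA IS]]. split; reflexivity.
  split; intros; rewrite !iterS; [rewrite IA, HA | rewrite IS, HS]; auto. Qed.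
Lemma span_inv {X : Banach} (G : X -> Prop) (T : X -> X) x :
  is_linear X T -> (forall y, G y -> G (T y)) -> span G x -> span G (T x).
Proof. intros HL HG Hx. induction Hx.
  rewrite lin0; auto. apply span_0. apply span_in; auto.
  rewrite (proj1 HL). apply span_add; auto.
  rewrite (proj2 HL). apply span_scal; auto. Qed.
Lemma iter_add {X : Banach} (T : X -> X) n m x : Nat.iter (n + m) T x = Nat.iter n T (Nat.iter m T x).
Proof. induction n; auto. simpl plus. rewrite !iterS, IHn; auto. Qed.
Lemma iter_S' {X : Banach} (T : X -> X) n x : Nat.iter (S n) T x = Nat.iter n T (T x).
Proof. replace (S n) with (n + 1)%nat by lia. apply iter_add. Qed.
Lemma iter_cancel {X : Banach} (T Tinv : X -> X) n x :
  (forall y, Tinv (T y) = y) -> Nat.iter n Tinv (Nat.iter n T x) = x.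
Proof. intros H. induction n; auto. rewrite iter_S', iterS, H; auto. Qed.

Lemma pow_small c : 0 <= c < 1 -> forall eps, 0 < eps -> exists N, forall n, (N <= n)%nat -> c ^ n < eps.
Proof. intros Hc eps He. destruct (pow_lt_1_zero c) with eps as [N HN]; auto.
  rewrite Rabs_pos_eq; lra. exists N. intros n Hn. specialize (HN n Hn).
  rewrite Rabs_pos_eq in HN; auto. apply pow_le; lra. Qed.
Lemma pow_decr c n m : 0 <= c <= 1 -> (n <= m)%nat -> c ^ m <= c ^ n.
Proof. intros Hc Hnm. induction Hnm. lra. simpl.
  pose proof (pow_le c m (proj1 Hc)). nra. Qed.
Lemma half_pow_small : forall eps, 0 < eps -> exists N, forall n, (N <= n)%nat -> (/2) ^ n < eps.
Proof. apply pow_small; lra. Qed.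

Lemma baire {X : Banach} (A : nat -> X -> Prop) :
  (forall y, exists n, A n y) ->
  exists n y r, 0 < r /\ forall z, bnorm (bsub z y) < r -> closure (A n) z.
Proof.
  intros Hcov. apply NNPP. intros Hno.
  assert (H : forall n y r, 0 < r -> exists z eps, bnorm (bsub z y) < r /\ 0 < eps /\
             forall w, A n w -> eps <= bnorm (bsub z w)).
  { intros n y r Hr. apply NNPP. intros Hc. apply Hno. exists n, y, r. split; auto.
    intros z Hz eps He. apply NNPP. intros Hc2. apply Hc. exists z, eps. split; auto. split; auto.
    intros w Hw. apply Rnot_lt_le. intros Hlt. apply Hc2. exists w; auto. }
  assert (Hstep : forall n y r, exists p : X * R, 0 < r ->
     bnorm (bsub (fst p) y) <= r / 2 /\ 0 < snd p /\ snd p <= r / 2 /\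
     forall w, A n w -> snd p < bnorm (bsub (fst p) w)).
  { intros n y r. destruct (Rlt_dec 0 r) as [Hr|Hr].
    - destruct (H n y (r/2)) as [z [eps [H1 [H2 H3]]]]. lra.
      exists (z, Rmin (r/2) (eps/2)). intros _. simpl. split. lra.
      split. apply Rmin_glb_lt; lra. split. apply Rmin_l.
      intros w Hw. specialize (H3 w Hw). pose proof (Rmin_r (r/2) (eps/2)). lra.
    - exists (y, r). intros Hr'. contradiction. }
  pose (step := fun n y r => proj1_sig (constructive_indefinite_description _ (Hstep n y r))).
  assert (Hsp : forall n y r, 0 < r ->
     bnorm (bsub (fst (step n y r)) y) <= r / 2 /\ 0 < snd (step n y r) /\ snd (step n y r) <= r / 2 /\
     forall w, A n w -> snd (step n y r) < bnorm (bsub (fst (step n y r)) w)).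
  { intros n y r. unfold step. destruct (constructive_indefinite_description _ (Hstep n y r)); simpl; auto. }
  clearbody step.
  pose (sq := fix f (n : nat) : X * R := match n with O => (bzero, 1) | S k => step k (fst (f k)) (snd (f k)) end).
  assert (HsqS : forall n, sq (S n) = step n (fst (sq n)) (snd (sq n))) by reflexivity.
  assert (Hsq0 : sq 0%nat = (bzero, 1)) by reflexivity.
  clearbody sq.
  set (y := fun n => fst (sq n)). set (r := fun n => snd (sq n)).
  assert (Hr0 : forall n, 0 < r n).
  { induction n. unfold r. rewrite Hsq0. simpl; lra.
    unfold r. rewrite HsqS. apply Hsp; auto. }
  assert (HS : forall n, bnorm (bsub (y (S n)) (y n)) <= r n / 2 /\ r (S n) <= r n / 2 /\ (forall w, A n w -> r (S n) < bnorm (bsub (y (S n)) w))).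
  { intros n. unfold y, r. rewrite HsqS. destruct (Hsp n (fst (sq n)) (snd (sq n)) (Hr0 n)) as [? [? [? ?]]].
    auto. }
  assert (Hrp : forall n, r n <= (/2) ^ n).
  { induction n. unfold r; rewrite Hsq0; simpl; lra. simpl. pose proof (proj1 (proj2 (HS n))). lra. }
  assert (Hyd : forall d n, bnorm (bsub (y (d + n)%nat) (y n)) <= r n - r (d + n)%nat).
  { induction d; intros n. simpl. rewrite subrr, norm0; lra.
    pose proof (dist_tri (y (S d + n)%nat) (y (d + n)%nat) (y n)).
    destruct (HS (d + n)%nat) as [H1 [H2 _]]. specialize (IHd n). simpl plus in *. lra. }
  assert (Hy : forall m n, (n <= m)%nat -> bnorm (bsub (y m) (y n)) <= r n).
  { intros m n Hmn. replace m with ((m - n) + n)%nat by lia. pose proof (Hyd (m - n)%nat n).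
    pose proof (Hr0 ((m - n) + n)%nat). lra. }
  destruct (bcomplete X y) as [l Hl].
  { intros eps He. destruct (half_pow_small eps He) as [N HN]. exists N. intros m n Hm Hn.
    change (bnorm (bsub (y m) (y n)) < eps).
    destruct (le_dec n m) as [Hnm|Hnm].
    - pose proof (Hy m n Hnm). pose proof (Hrp n). pose proof (HN n Hn). lra.
    - rewrite dist_sym. pose proof (Hy n m ltac:(lia)). pose proof (Hrp m). pose proof (HN m Hm). lra. }
  assert (Hln : forall n, bnorm (bsub l (y n)) <= r n).
  { intros n. apply Rle_plus_epsilon. intros eps He. destruct (Hl eps He) as [N HN].
    specialize (HN (Nat.max N n) ltac:(lia)). change (bnorm (bsub (y (Nat.max N n)) l) < eps) in HN.
    pose proof (Hy (Nat.max N n) n ltac:(lia)). pose proof (dist_tri l (y (Nat.max N n)) (y n)).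
    rewrite dist_sym in HN. lra. }
  destruct (Hcov l) as [n Hn]. destruct (HS n) as [_ [_ H3]]. specialize (H3 l Hn).
  specialize (Hln (S n)). rewrite dist_sym in Hln. lra.
Qed.

Fixpoint psum {X : Banach} (v : nat -> X) (n : nat) : X :=
  match n with O => bzero | S k => badd (psum v k) (v k) end.

Lemma sub_addl {X : Banach} (p q r : X) : bsub (badd p q) r = badd (bsub p r) q.
Proof. unfold bsub. rewrite <- !badd_assoc. f_equal. apply badd_comm. Qed.

Lemma sub_closed {X : Banach} (E : X -> Prop) x y : is_subspace X E -> E x -> E y -> E (bsub x y).
Proof. intros [H0 [Ha Hs]] Hx Hy. unfold bsub. apply Ha; auto. rewrite <- scalN1. apply Hs; auto. Qed.

Lemma psum_in {X : Banach} (E : X -> Prop) v n : is_subspace X E -> (forall j, E (v j)) -> E (psum v n).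
Proof. intros HE Hv. induction n; simpl. apply HE. apply HE; auto. Qed.

Lemma geom_sum {X : Banach} (E : X -> Prop) (v : nat -> X) K :
  is_closed_subspace X E -> (forall j, E (v j)) -> (forall j, bnorm (v j) <= K * (/2) ^ j) ->
  exists L, E L /\ bnorm L <= 2 * K /\
    forall eps, 0 < eps -> exists N, forall n, (N <= n)%nat -> bnorm (bsub (psum v n) L) < eps.
Proof.
  intros [HE HEc] Hv Hb.
  assert (HK : 0 <= K). { pose proof (Hb 0%nat). pose proof (norm_ge0 (v 0%nat)). simpl in *. lra. }
  assert (Hd : forall d n, bnorm (bsub (psum v (d + n)) (psum v n)) <= 2 * K * ((/2) ^ n - (/2) ^ (d + n))).
  { induction d; intros n. simpl. rewrite subrr, norm0. lra.
    simpl plus. simpl psum. rewrite sub_addl.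
    pose proof (bnorm_triangle _ (bsub (psum v (d + n)) (psum v n)) (v (d + n)%nat)).
    specialize (IHd n). specialize (Hb (d + n)%nat). simpl pow. lra. }
  assert (Hc : forall m n, (n <= m)%nat -> bnorm (bsub (psum v m) (psum v n)) <= 2 * K * (/2) ^ n).
  { intros m n Hmn. replace m with ((m - n) + n)%nat by lia. pose proof (Hd (m - n)%nat n).
    pose proof (pow_le (/2) ((m - n) + n)%nat ltac:(lra)). nra. }
  assert (Hp : forall n, bnorm (psum v n) <= 2 * K).
  { intros n. pose proof (Hc n 0%nat ltac:(lia)). simpl psum in H. rewrite sub0 in H. simpl in H. lra. }
  destruct (bcomplete X (psum v)) as [L HL].
  { intros eps He. destruct (half_pow_small (eps / (2 * K + 1))) as [N HN].
    apply Rdiv_lt_0_compat; lra. exists N. intros m n Hm Hn.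
    change (bnorm (bsub (psum v m) (psum v n)) < eps).
    assert (Hq : forall k, (N <= k)%nat -> 2 * K * (/2) ^ k < eps).
    { intros k Hk. specialize (HN k Hk). pose proof (pow_le (/2) k ltac:(lra)).
      assert (Heq : eps / (2 * K + 1) * (2 * K + 1) = eps) by (field; lra).
      nra. }
    destruct (le_dec n m) as [Hnm|Hnm].
    - pose proof (Hc m n Hnm). pose proof (Hq n Hn). lra.
    - rewrite dist_sym. pose proof (Hc n m ltac:(lia)). pose proof (Hq m Hm). lra. }
  exists L. split; [|split].
  - apply HEc. intros eps He. destruct (HL eps He) as [N HN]. exists (psum v N). split.
    apply psum_in; auto. rewrite dist_sym. apply HN; lia.
  - apply Rle_plus_epsilon. intros eps He. destruct (HL eps He) as [N HN]. specialize (HN N (le_n N)).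
    pose proof (norm_sub_le L (psum v N)). rewrite dist_sym in H. change (bnorm (bsub (psum v N) L) < eps) in HN.
    pose proof (Hp N). lra.
  - exact HL.
Qed.

Lemma decomp_uniq {X : Banach} (Em Ep : X -> Prop) a1 b1 a2 b2 :
  is_subspace X Em -> is_subspace X Ep -> (forall x, Em x -> Ep x -> x = bzero) ->
  Em a1 -> Ep b1 -> Em a2 -> Ep b2 -> badd a1 b1 = badd a2 b2 -> a1 = a2 /\ b1 = b2.
Proof.
  intros HEm HEp Hi H1 H2 H3 H4 H.
  assert (H0 : badd (bsub a1 a2) (bsub b1 b2) = bzero) by (rewrite <- sub_addadd, H; apply subrr).
  apply opp_uniq in H0.
  assert (Hz : bsub a1 a2 = bzero).
  { apply Hi. apply sub_closed; auto. rewrite <- (oppK (bsub a1 a2)), <- H0, <- scalN1.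
    apply HEp. apply sub_closed; auto. }
  rewrite Hz, opp0 in H0. split; apply sub_eq0; auto. Qed.

Lemma alg1 {X : Banach} (y z u1 u2 : X) :
  bsub z (bsub u1 u2) = bsub (bsub (badd y z) u1) (bsub y u2).
Proof. change (bsub z (bsub u1 u2) = bsub (badd (badd y z) (bopp u1)) (badd y (bopp u2))).
  rewrite sub_addadd. unfold bsub.
  rewrite (badd_comm _ y z), addrK, oppD, oppK. auto. Qed.

Lemma bscal_inv {X : Banach} s (x : X) : s <> 0 -> bscal (/ s) (bscal s x) = x.
Proof. intros Hs. rewrite bscal_assoc, Rinv_l, bscal_1; auto. Qed.

Lemma addACA {X : Banach} (a b c d : X) : badd (badd a b) (badd c d) = badd (badd a c) (badd b d).
Proof. rewrite <- !badd_assoc. f_equal. rewrite !badd_assoc. f_equal. apply badd_comm. Qed.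

Lemma approx_lemma {X : Banach} (Em Ep : X -> Prop) (N : nat) (y0 : X) (r : R) :
  is_subspace X Em -> is_subspace X Ep -> 0 < r ->
  (forall z, bnorm (bsub z y0) < r -> closure (fun y => exists a b, Em a /\ Ep b /\ y = badd a b /\
        bnorm a <= INR N /\ bnorm b <= INR N) z) ->
  forall z delta, 0 < delta -> exists a b, Em a /\ Ep b /\
     bnorm a <= 4 * INR N / r * bnorm z /\ bnorm b <= 4 * INR N / r * bnorm z /\
     bnorm (bsub z (badd a b)) < delta.
Proof.
  intros HEm HEp Hr Hball z delta Hd.
  destruct (Req_dec (bnorm z) 0) as [Hz|Hz].
  { exists bzero, bzero. rewrite Hz, (bnorm_eq0 _ z Hz), add0r, subrr, norm0.
    split. apply HEm. split. apply HEp. repeat split; try lra. }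
  pose proof (norm_ge0 z) as Hz0.
  set (s := r / (2 * bnorm z)).
  assert (Hs : 0 < s) by (unfold s; apply Rdiv_lt_0_compat; lra).
  set (z' := bscal s z).
  assert (Hz' : bnorm z' = r / 2).
  { unfold z'. rewrite bnorm_scal, Rabs_pos_eq by lra. unfold s. field; lra. }
  set (d' := delta * s / 2).
  assert (Hd' : 0 < d') by (unfold d'; nra).
  destruct (Hball (badd y0 z')) with d' as [u1 [[a1 [b1 [Ha1 [Hb1 [Hu1 [Na1 Nb1]]]]]] Hu1d]]; auto.
  { rewrite badd_comm. unfold bsub. rewrite addrK. lra. }
  destruct (Hball y0) with d' as [u2 [[a2 [b2 [Ha2 [Hb2 [Hu2 [Na2 Nb2]]]]]] Hu2d]]; auto.
  { rewrite subrr, norm0. lra. }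
  set (a' := bsub a1 a2). set (b' := bsub b1 b2).
  assert (He : bnorm (bsub z' (badd a' b')) < delta * s).
  { unfold a', b'. rewrite <- sub_addadd, <- Hu1, <- Hu2, (alg1 y0).
    change (bnorm (badd (bsub (badd y0 z') u1) (bopp (bsub y0 u2))) < delta * s).
    pose proof (bnorm_triangle _ (bsub (badd y0 z') u1) (bopp (bsub y0 u2))). rewrite normN in H.
    unfold d' in *. lra. }
  assert (Na' : bnorm a' <= 2 * INR N).
  { unfold a', bsub. pose proof (bnorm_triangle _ a1 (bopp a2)). rewrite normN in H. lra. }
  assert (Nb' : bnorm b' <= 2 * INR N).
  { unfold b', bsub. pose proof (bnorm_triangle _ b1 (bopp b2)). rewrite normN in H. lra. }
  exists (bscal (/ s) a'), (bscal (/ s) b'). split; [apply HEm; apply sub_closed; auto|].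
  split; [apply HEp; apply sub_closed; auto|].
  assert (Hinv : / s = 2 * bnorm z / r) by (unfold s; field; lra).
  assert (HM : 2 * INR N * / s = 4 * INR N / r * bnorm z) by (rewrite Hinv; field; lra).
  assert (Hsi : 0 < / s) by (apply Rinv_0_lt_compat; lra).
  split; [|split].
  - rewrite bnorm_scal, Rabs_pos_eq by lra. rewrite <- HM. nra.
  - rewrite bnorm_scal, Rabs_pos_eq by lra. rewrite <- HM. nra.
  - rewrite <- (bscal_inv s z) by lra. fold z'. rewrite <- bscal_addv, <- scal_sub, bnorm_scal, Rabs_pos_eq by lra.
    apply Rlt_le_trans with (/ s * (delta * s)). apply Rmult_lt_compat_l; auto.
    right. field. lra.
Qed.

Lemma le_all_eps_0 x : 0 <= x -> (forall eps, 0 < eps -> x <= eps) -> x = 0.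
Proof. intros H0 H. apply Rle_antisym; auto. apply Rle_plus_epsilon. intros. rewrite Rplus_0_l; auto. Qed.

Lemma iter_decomp {X : Banach} (Em Ep : X -> Prop) (M : R) :
  is_closed_subspace X Em -> is_closed_subspace X Ep -> 0 <= M ->
  (forall z delta, 0 < delta -> exists a b, Em a /\ Ep b /\
     bnorm a <= M * bnorm z /\ bnorm b <= M * bnorm z /\ bnorm (bsub z (badd a b)) < delta) ->
  forall z, exists A B, Em A /\ Ep B /\ z = badd A B /\ bnorm A <= 2 * M * bnorm z.
Proof.
  intros HEm HEp HM Happ z.
  destruct (Req_dec (bnorm z) 0) as [Hz|Hz].
  { exists bzero, bzero. rewrite (bnorm_eq0 _ z Hz), add0r, norm0.
    split. apply (proj1 HEm). split. apply (proj1 HEp). repeat split; try lra. }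
  pose proof (norm_ge0 z) as Hz0.
  assert (HF : forall (j : nat) (w : X), exists p : X * X, Em (fst p) /\ Ep (snd p) /\
      bnorm (fst p) <= M * bnorm w /\ bnorm (snd p) <= M * bnorm w /\
      bnorm (bsub w (badd (fst p) (snd p))) < bnorm z * (/2) ^ (S j)).
  { intros j w. destruct (Happ w (bnorm z * (/2) ^ (S j))) as [a [b H]].
    pose proof (pow_lt (/2) (S j) ltac:(lra)). nra. exists (a, b). exact H. }
  pose (F := fun j w => proj1_sig (constructive_indefinite_description _ (HF j w))).
  assert (HFs : forall j w, Em (fst (F j w)) /\ Ep (snd (F j w)) /\
      bnorm (fst (F j w)) <= M * bnorm w /\ bnorm (snd (F j w)) <= M * bnorm w /\
      bnorm (bsub w (badd (fst (F j w)) (snd (F j w)))) < bnorm z * (/2) ^ (S j)).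
  { intros j w. unfold F. destruct (constructive_indefinite_description _ (HF j w)); auto. }
  clearbody F.
  pose (w := fix f (n : nat) : X := match n with O => z
        | S k => bsub (f k) (badd (fst (F k (f k))) (snd (F k (f k)))) end).
  assert (Hw0 : w 0%nat = z) by reflexivity.
  assert (HwS : forall n, w (S n) = bsub (w n) (badd (fst (F n (w n))) (snd (F n (w n))))) by reflexivity.
  clearbody w.
  set (a := fun j => fst (F j (w j))). set (b := fun j => snd (F j (w j))).
  assert (Hwn : forall n, bnorm (w n) <= bnorm z * (/2) ^ n).
  { induction n. rewrite Hw0. simpl; lra. rewrite HwS. left. apply HFs. }
  assert (Hab : forall j, bnorm (a j) <= M * bnorm z * (/2) ^ j /\ bnorm (b j) <= M * bnorm z * (/2) ^ j).
  { intros j. destruct (HFs j (w j)) as [_ [_ [H1 [H2 _]]]]. specialize (Hwn j).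
    unfold a, b. split; nra. }
  destruct (geom_sum Em a (M * bnorm z)) as [A [HA1 [HA2 HA3]]]; auto.
  { intros j. apply HFs. } { intros j. apply Hab. }
  destruct (geom_sum Ep b (M * bnorm z)) as [B [HB1 [HB2 HB3]]]; auto.
  { intros j. apply HFs. } { intros j. apply Hab. }
  assert (Hinv : forall n, z = badd (badd (psum a n) (psum b n)) (w n)).
  { induction n. rewrite Hw0. simpl. rewrite add0r, badd_0l; auto.
    rewrite IHn at 1. simpl psum. rewrite HwS. fold (a n) (b n).
    rewrite addACA. unfold bsub. rewrite addACA, addrN, add0r; auto. }
  exists A, B. split; auto. split; auto. split; [|lra].
  apply sub_eq0. apply bnorm_eq0. apply le_all_eps_0. apply norm_ge0.
  intros eps He.
  destruct (HA3 (eps/3)) as [N1 HN1]. lra. destruct (HB3 (eps/3)) as [N2 HN2]. lra.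
  destruct (half_pow_small (eps / 3 / (bnorm z))) as [N3 HN3].
  { apply Rdiv_lt_0_compat; lra. }
  set (n := Nat.max N1 (Nat.max N2 N3)).
  specialize (HN1 n ltac:(lia)). specialize (HN2 n ltac:(lia)). specialize (HN3 n ltac:(lia)).
  rewrite (Hinv n), sub_addl, sub_addadd.
  pose proof (bnorm_triangle _ (badd (bsub (psum a n) A) (bsub (psum b n) B)) (w n)).
  pose proof (bnorm_triangle _ (bsub (psum a n) A) (bsub (psum b n) B)).
  pose proof (Hwn n).
  assert (bnorm z * (/2) ^ n < eps / 3).
  { apply Rmult_lt_compat_l with (r := bnorm z) in HN3; [|lra].
    replace (bnorm z * (eps / 3 / bnorm z)) with (eps / 3) in HN3 by (field; lra). lra. }
  lra.
Qed.

Lemma proj_bound {X : Banach} (Em Ep : X -> Prop) :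
  is_closed_subspace X Em -> is_closed_subspace X Ep ->
  (forall x, Em x -> Ep x -> x = bzero) ->
  (forall x, exists a b, Em a /\ Ep b /\ x = badd a b) ->
  exists C, 0 <= C /\ forall a b, Em a -> Ep b -> bnorm a <= C * bnorm (badd a b).
Proof.
  intros HEm HEp Hi Hcov.
  destruct (baire (fun n y => exists a b, Em a /\ Ep b /\ y = badd a b /\
        bnorm a <= INR n /\ bnorm b <= INR n)) as [N [y0 [r [Hr Hball]]]].
  { intros y. destruct (Hcov y) as [a [b [Ha [Hb Hy]]]].
    destruct (INR_unbounded (bnorm a + bnorm b)) as [n Hn]. exists n, a, b.
    pose proof (norm_ge0 a). pose proof (norm_ge0 b). repeat split; auto; lra. }
  pose proof (approx_lemma Em Ep N y0 r (proj1 HEm) (proj1 HEp) Hr Hball) as Happ.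
  assert (HM : 0 <= 4 * INR N / r). { pose proof (pos_INR N). unfold Rdiv. apply Rmult_le_pos. lra. left; apply Rinv_0_lt_compat; lra. }
  pose proof (iter_decomp Em Ep _ HEm HEp HM Happ) as Hd.
  exists (2 * (4 * INR N / r)). split. lra.
  intros a b Ha Hb. destruct (Hd (badd a b)) as [A [B [HA [HB [He HA2]]]]].
  destruct (decomp_uniq Em Ep a b A B (proj1 HEm) (proj1 HEp) Hi Ha Hb HA HB He) as [-> _]. auto.
Qed.

Definition Gp {X : Banach} (T Tinv : X -> X) (Em Ep : X -> Prop) (y : X) : Prop :=
  exists k x, E0 X T Em Ep x /\ (y = Nat.iter k T x \/ y = Nat.iter k Tinv x).

Lemma G_iff {X : Banach} (T Tinv : X -> X) Em Ep y :
  (exists (n : Z) (x : X), E0 X T Em Ep x /\ y = zpow X T Tinv n x) <-> Gp T Tinv Em Ep y.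
Proof. split.
  - intros [n [x [Hx ->]]]. destruct n as [|p|p].
    + exists 0%nat, x. split; auto.
    + exists (Pos.to_nat p), x. split; auto.
    + exists (Pos.to_nat p), x. split; auto.
  - intros [k [x [Hx [->| ->]]]].
    + destruct k. exists Z0, x; auto. exists (Zpos (Pos.of_succ_nat k)), x. split; auto.
      simpl. rewrite SuccNat2Pos.id_succ; auto.
    + destruct k. exists Z0, x; auto. exists (Zneg (Pos.of_succ_nat k)), x. split; auto.
      simpl. rewrite SuccNat2Pos.id_succ; auto.
Qed.

Lemma Gp_T {X : Banach} (T Tinv : X -> X) Em Ep y :
  (forall z, T (Tinv z) = z) -> Gp T Tinv Em Ep y -> Gp T Tinv Em Ep (T y).
Proof. intros HTT [k [x [Hx [->| ->]]]].
  - exists (S k), x. split; auto.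
  - destruct k. exists 1%nat, x; auto. exists k, x. split; auto. right. rewrite iterS, HTT; auto.
Qed.
Lemma Gp_Tinv {X : Banach} (T Tinv : X -> X) Em Ep y :
  (forall z, Tinv (T z) = z) -> Gp T Tinv Em Ep y -> Gp T Tinv Em Ep (Tinv y).
Proof. intros HTT [k [x [Hx [->| ->]]]].
  - destruct k. exists 1%nat, x; auto. exists k, x. split; auto. left. rewrite iterS, HTT; auto.
  - exists (S k), x. split; auto.
Qed.

Definition Conv {X : Banach} (T Tinv : X -> X) (y : X) : Prop :=
  (forall eps, 0 < eps -> exists N, forall n, (N <= n)%nat -> bnorm (Nat.iter n T y) < eps) /\
  (forall eps, 0 < eps -> exists N, forall n, (N <= n)%nat -> bnorm (Nat.iter n Tinv y) < eps).

Lemma tends_add {X : Banach} (U : nat -> X -> X) x y :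
  (forall n, is_linear X (U n)) ->
  (forall eps, 0 < eps -> exists N, forall n, (N <= n)%nat -> bnorm (U n x) < eps) ->
  (forall eps, 0 < eps -> exists N, forall n, (N <= n)%nat -> bnorm (U n y) < eps) ->
  (forall eps, 0 < eps -> exists N, forall n, (N <= n)%nat -> bnorm (U n (badd x y)) < eps).
Proof. intros HL Hx Hy eps He. destruct (Hx (eps/2)) as [N1 H1]. lra. destruct (Hy (eps/2)) as [N2 H2]. lra.
  exists (Nat.max N1 N2). intros n Hn. rewrite (proj1 (HL n)).
  pose proof (bnorm_triangle _ (U n x) (U n y)). specialize (H1 n ltac:(lia)). specialize (H2 n ltac:(lia)). lra.
Qed.
Lemma tends_scal {X : Banach} (U : nat -> X -> X) a x :
  (forall n, is_linear X (U n)) ->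
  (forall eps, 0 < eps -> exists N, forall n, (N <= n)%nat -> bnorm (U n x) < eps) ->
  (forall eps, 0 < eps -> exists N, forall n, (N <= n)%nat -> bnorm (U n (bscal a x)) < eps).
Proof. intros HL Hx eps He. assert (Ha : 0 < Rabs a + 1) by (pose proof (Rabs_pos a); lra).
  destruct (Hx (eps / (Rabs a + 1))) as [N H1]. apply Rdiv_lt_0_compat; lra.
  exists N. intros n Hn. rewrite (proj2 (HL n)), bnorm_scal. specialize (H1 n Hn).
  pose proof (norm_ge0 (U n x)). pose proof (Rabs_pos a).
  assert (Heq : eps / (Rabs a + 1) * (Rabs a + 1) = eps) by (field; lra). nra.
Qed.
Lemma tends_0 {X : Banach} (U : nat -> X -> X) :
  (forall n, is_linear X (U n)) ->
  (forall eps, 0 < eps -> exists N, forall n, (N <= n)%nat -> bnorm (U n bzero) < eps).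
Proof. intros HL eps He. exists 0%nat. intros n _. rewrite lin0, norm0; auto. Qed.

Lemma tends_shift {X : Banach} (v : nat -> X) :
  (forall eps, 0 < eps -> exists N, forall n, (N <= n)%nat -> bnorm (v n) < eps) ->
  (forall eps, 0 < eps -> exists N, forall n, (N <= n)%nat -> bnorm (v (S n)) < eps).
Proof. intros H eps He. destruct (H eps He) as [N HN]. exists N. intros; apply HN; lia. Qed.
Lemma tends_unshift {X : Banach} (v : nat -> X) :
  (forall eps, 0 < eps -> exists N, forall n, (N <= n)%nat -> bnorm (v (S n)) < eps) ->
  (forall eps, 0 < eps -> exists N, forall n, (N <= n)%nat -> bnorm (v n) < eps).
Proof. intros H eps He. destruct (H eps He) as [N HN]. exists (S N). intros n Hn.
  destruct n. lia. apply HN; lia. Qed.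

Lemma Conv_T {X : Banach} (T Tinv : X -> X) y :
  (forall z, Tinv (T z) = z) -> Conv T Tinv y -> Conv T Tinv (T y).
Proof. intros H [H1 H2]. split.
  - intros eps He. destruct (tends_shift _ H1 eps He) as [N HN]. exists N. intros n Hn.
    rewrite <- iter_S'. auto.
  - apply tends_unshift. intros eps He. destruct (H2 eps He) as [N HN]. exists N. intros n Hn.
    rewrite iter_S', H. auto.
Qed.
Lemma Conv_Tinv {X : Banach} (T Tinv : X -> X) y :
  (forall z, T (Tinv z) = z) -> Conv T Tinv y -> Conv T Tinv (Tinv y).
Proof. intros H [H1 H2]. split.
  - apply tends_unshift. intros eps He. destruct (H1 eps He) as [N HN]. exists N. intros n Hn.
    rewrite iter_S', H. auto.
  - intros eps He. destruct (tends_shift _ H2 eps He) as [N HN]. exists N. intros n Hn.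
    rewrite <- iter_S'. auto.
Qed.

Lemma contr_iter {X : Banach} (T : X -> X) (E : X -> Prop) c :
  (forall x, E x -> E (T x)) -> (forall x, E x -> bnorm (T x) <= c * bnorm x) -> 0 <= c ->
  forall n v, E v -> E (Nat.iter n T v) /\ bnorm (Nat.iter n T v) <= c ^ n * bnorm v.
Proof. intros HE Hc Hc0 n v Hv. induction n. simpl; split; auto; lra.
  destruct IHn as [H1 H2]. rewrite iterS. split; auto. specialize (Hc _ H1). simpl. nra. Qed.

Lemma contr_tends {X : Banach} (T : X -> X) (E : X -> Prop) v :
  (forall x, E x -> E (T x)) -> uniform_contraction_on X T E -> E v ->
  (forall eps, 0 < eps -> exists N, forall n, (N <= n)%nat -> bnorm (Nat.iter n T v) < eps).
Proof. intros HE [c [Hc0 [Hc1 Hc]]] Hv eps He.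
  pose proof (norm_ge0 v).
  destruct (pow_small c (conj Hc0 Hc1) (eps / (bnorm v + 1))) as [N HN]. apply Rdiv_lt_0_compat; lra.
  exists N. intros n Hn. destruct (contr_iter T E c HE Hc Hc0 n v Hv) as [_ H2].
  specialize (HN n Hn). pose proof (pow_le c n Hc0).
  assert (Heq : eps / (bnorm v + 1) * (bnorm v + 1) = eps) by (field; lra). nra.
Qed.

Lemma E0_Conv {X : Banach} (T Tinv : X -> X) Em Ep x :
  in_Laut X T Tinv -> generalized_hyperbolic_split X T Tinv Em Ep -> E0 X T Em Ep x -> Conv T Tinv x.
Proof. intros HL [_ [_ [_ [_ [HTp [HTm [Cp Cm]]]]]]] [Hxm Hxp]. split.
  - apply tends_unshift. intros eps He. destruct (contr_tends T Ep (T x) HTp Cp Hxp eps He) as [N HN].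
    exists N. intros n Hn. rewrite iter_S'. auto.
  - apply (contr_tends Tinv Em x HTm Cm Hxm).
Qed.

Lemma span_Conv {X : Banach} (T Tinv : X -> X) Em Ep y :
  in_Laut X T Tinv -> generalized_hyperbolic_split X T Tinv Em Ep ->
  span (Gp T Tinv Em Ep) y -> Conv T Tinv y.
Proof. intros HL HG Hy.
  pose proof HL as [LT [_ [LTi [_ [HTT HTiT]]]]].
  induction Hy.
  - split; [apply (tends_0 (fun n => Nat.iter n T))|apply (tends_0 (fun n => Nat.iter n Tinv))];
      intros; apply iter_lin; auto.
  - destruct H as [k [x0 [Hx0 [->| ->]]]].
    + induction k. apply (E0_Conv T Tinv Em Ep); auto. rewrite iterS. apply Conv_T; auto.
    + induction k. apply (E0_Conv T Tinv Em Ep); auto. rewrite iterS. apply Conv_Tinv; auto.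
  - destruct IHHy1, IHHy2. split; [apply (tends_add (fun n => Nat.iter n T))|apply (tends_add (fun n => Nat.iter n Tinv))];
      auto; intros; apply iter_lin; auto.
  - destruct IHHy. split; [apply (tends_scal (fun n => Nat.iter n T))|apply (tends_scal (fun n => Nat.iter n Tinv))];
      auto; intros; apply iter_lin; auto.
Qed.

Lemma Conv_BT {X : Banach} (T Tinv : X -> X) y : Conv T Tinv y -> BT X T Tinv y.
Proof. intros [H1 H2]. destruct (H1 1 ltac:(lra)) as [N1 HN1]. destruct (H2 1 ltac:(lra)) as [N2 HN2].
  exists 1. split. lra. exists (fun n => S (N1 + n)), (fun n => S (N2 + n)).
  repeat split; intros; try lia. apply HN1; lia. apply HN2; lia. Qed.

Lemma L1 {X : Banach} (T Tinv : X -> X) Em Ep :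
  in_Laut X T Tinv -> generalized_hyperbolic_split X T Tinv Em Ep ->
  forall k b, Ep b -> exists s f, span (Gp T Tinv Em Ep) s /\ Em s /\ Ep f /\ Nat.iter k Tinv b = badd s f.
Proof.
  intros HL HG. pose proof HL as [LT [_ [LTi [_ [HTT HTiT]]]]].
  pose proof HG as [[HEm HEmc] [[HEp HEpc] [Hi [Hcov [HTp [HTm [Cp Cm]]]]]]].
  intros k b Hb. induction k.
  - exists bzero, b. split. apply span_0. split. apply HEm. split; auto. simpl. rewrite badd_0l; auto.
  - destruct IHk as [s [f [Hs [Hsm [Hf Heq]]]]]. rewrite iterS, Heq, (proj1 LTi).
    destruct (Hcov (Tinv f)) as [a2 [b2 [Ha2 [Hb2 Hd]]]].
    assert (Ha2' : a2 = bsub (Tinv f) b2) by (rewrite Hd; unfold bsub; rewrite addrK; auto).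
    exists (badd (Tinv s) a2), b2. split; [|split; [|split]].
    + apply span_add. apply span_inv; auto. intros; apply Gp_Tinv; auto.
      apply span_in. exists 0%nat, a2. split; auto. split; auto.
      rewrite Ha2', linB, HTT; auto. apply sub_closed; auto.
    + apply HEm; auto.
    + auto.
    + rewrite Hd, badd_assoc; auto.
Qed.

Lemma L2 {X : Banach} (T Tinv : X -> X) Em Ep :
  in_Laut X T Tinv -> generalized_hyperbolic_split X T Tinv Em Ep ->
  forall k a, Em a -> exists s e, span (Gp T Tinv Em Ep) s /\ Ep s /\ Em e /\ Nat.iter k T a = badd s e.
Proof.
  intros HL HG. pose proof HL as [LT [_ [LTi [_ [HTT HTiT]]]]].
  pose proof HG as [[HEm HEmc] [[HEp HEpc] [Hi [Hcov [HTp [HTm [Cp Cm]]]]]]].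
  intros k a Ha. induction k.
  - exists bzero, a. split. apply span_0. split. apply HEp. split; auto. simpl. rewrite badd_0l; auto.
  - destruct IHk as [s [e [Hs [Hsp [He Heq]]]]]. rewrite iterS, Heq, (proj1 LT).
    destruct (Hcov (T e)) as [a2 [b2 [Ha2 [Hb2 Hd]]]].
    assert (Hb2' : b2 = bsub (T e) a2).
    { rewrite Hd, badd_comm. unfold bsub; rewrite addrK; auto. }
    exists (badd (T s) b2), a2. split; [|split; [|split]].
    + apply span_add. apply span_inv; auto. intros; apply Gp_T; auto.
      apply span_in. exists 1%nat, (Tinv b2). split. split.
      rewrite Hb2', linB, HTiT; auto. apply sub_closed; auto.
      rewrite HTT; auto. left. simpl. rewrite HTT; auto.
    + apply HEp; auto.
    + auto.
    + rewrite Hd, (badd_comm _ a2 b2), badd_assoc; auto.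
Qed.

Lemma mono_ge (f : nat -> nat) : (forall n, (f n < f (S n))%nat) -> forall n, (n <= f n)%nat.
Proof. intros H n. induction n. lia. specialize (H n). lia. Qed.

Lemma BT_Sig {X : Banach} (T Tinv : X -> X) Em Ep x :
  in_Laut X T Tinv -> generalized_hyperbolic_split X T Tinv Em Ep ->
  BT X T Tinv x -> closure (span (Gp T Tinv Em Ep)) x.
Proof.
  intros HL HG HB. pose proof HL as [LT [_ [LTi [_ [HTT HTiT]]]]].
  pose proof HG as [[HEm HEmc] [[HEp HEpc] [Hi [Hcov [HTp [HTm [Cp Cm]]]]]]].
  destruct (proj_bound Em Ep (conj HEm HEmc) (conj HEp HEpc) Hi Hcov) as [C [HC0 HC]].
  destruct Cp as [c [Hc0 [Hc1 Hc]]]. destruct Cm as [c' [Hc0' [Hc1' Hc']]].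
  destruct HB as [K [HK [k [m [Hk0 [Hk [Hm0 [Hm [Hkb Hmb]]]]]]]]].
  destruct (Hcov x) as [ax [bx [Hax [Hbx Hx]]]].
  rewrite Hx. apply cl_add. { intros; apply span_add; auto. }
  - intros eps He.
    destruct (pow_small c' (conj Hc0' Hc1') (eps / (C * K + 1))) as [N HN].
    { apply Rdiv_lt_0_compat; nra. }
    set (kk := k N). assert (Hkk : (N <= kk)%nat) by (apply mono_ge; auto).
    set (y := Nat.iter kk T x). assert (Hy : bnorm y < K) by apply Hkb.
    destruct (Hcov y) as [a [b [Ha [Hb Hy']]]].
    pose proof (HC a b Ha Hb) as Hab. rewrite <- Hy' in Hab.
    destruct (L1 T Tinv Em Ep HL HG kk b Hb) as [s [f [Hs [Hsm [Hf Heq]]]]].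
    destruct (contr_iter Tinv Em c' HTm Hc' Hc0' kk a Ha) as [HPa HPn].
    assert (Hxe : badd ax bx = badd (badd (Nat.iter kk Tinv a) s) f).
    { rewrite <- Hx, <- badd_assoc, <- Heq, <- (proj1 (iter_lin Tinv kk LTi)), <- Hy'.
      unfold y. symmetry. apply iter_cancel; auto. }
    destruct (decomp_uniq Em Ep _ _ _ _ HEm HEp Hi Hax Hbx (proj1 (proj2 HEm) _ _ HPa Hsm) Hf Hxe) as [-> _].
    exists s. split; auto. unfold bsub. rewrite addrK.
    pose proof (pow_decr c' N kk (conj Hc0' (Rlt_le _ _ Hc1')) Hkk).
    specialize (HN N (le_n N)). pose proof (pow_le c' N Hc0'). pose proof (pow_le c' kk Hc0').
    pose proof (norm_ge0 a). pose proof (norm_ge0 y).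
    assert (Heq2 : eps / (C * K + 1) * (C * K + 1) = eps) by (field; nra).
    assert (bnorm a <= C * K) by nra.
    assert (c' ^ kk * bnorm a <= c' ^ N * (C * K)) by nra.
    nra.
  - intros eps He.
    destruct (pow_small c (conj Hc0 Hc1) (eps / ((1 + C) * K + 1))) as [N HN].
    { apply Rdiv_lt_0_compat; nra. }
    set (mm := m N). assert (Hmm : (N <= mm)%nat) by (apply mono_ge; auto).
    set (y := Nat.iter mm Tinv x). assert (Hy : bnorm y < K) by apply Hmb.
    destruct (Hcov y) as [a [b [Ha [Hb Hy']]]].
    pose proof (HC a b Ha Hb) as Hab. rewrite <- Hy' in Hab.
    assert (Hbn : bnorm b <= (1 + C) * K).
    { assert (b = bsub y a) by (rewrite Hy', badd_comm; unfold bsub; rewrite addrK; auto).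
      pose proof (bnorm_triangle _ y (bopp a)). rewrite normN in H0. rewrite H.
      change (bnorm (badd y (bopp a)) <= (1 + C) * K). pose proof (norm_ge0 y). nra. }
    destruct (L2 T Tinv Em Ep HL HG mm a Ha) as [s [e [Hs [Hsp [He' Heq]]]]].
    destruct (contr_iter T Ep c HTp Hc Hc0 mm b Hb) as [HPb HPn].
    assert (Hxe : badd ax bx = badd e (badd s (Nat.iter mm T b))).
    { rewrite <- Hx, badd_assoc, (badd_comm _ e s), <- Heq, <- (proj1 (iter_lin T mm LT)), <- Hy'.
      unfold y. symmetry. apply iter_cancel; auto. }
    destruct (decomp_uniq Em Ep _ _ _ _ HEm HEp Hi Hax Hbx He' (proj1 (proj2 HEp) _ _ Hsp HPb) Hxe) as [_ ->].
    exists s. split; auto. rewrite badd_comm. unfold bsub. rewrite addrK.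
    pose proof (pow_decr c N mm (conj Hc0 (Rlt_le _ _ Hc1)) Hmm).
    specialize (HN N (le_n N)). pose proof (pow_le c N Hc0). pose proof (pow_le c mm Hc0).
    pose proof (norm_ge0 b).
    assert (Heq2 : eps / ((1 + C) * K + 1) * ((1 + C) * K + 1) = eps) by (field; nra).
    assert (c ^ mm * bnorm b <= c ^ N * ((1 + C) * K)) by nra.
    nra.
Qed.

Lemma span_mono {X : Banach} (G G' : X -> Prop) y : (forall z, G z -> G' z) -> span G y -> span G' y.
Proof. intros H Hy. induction Hy. apply span_0. apply span_in; auto. apply span_add; auto. apply span_scal; auto. Qed.

Lemma lincomb_shift {X : Banach} (c : nat -> R) (v : nat -> X) n :
  lincomb X c v (S n) = badd (bscal (c 0%nat) (v 0%nat)) (lincomb X (fun i => c (S i)) (fun i => v (S i)) n).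
Proof. induction n. simpl. rewrite badd_0l, add0r; auto.
  change (lincomb X c v (S (S n))) with (badd (lincomb X c v (S n)) (bscal (c (S n)) (v (S n)))).
  rewrite IHn. simpl. rewrite badd_assoc; auto. Qed.

Lemma lincomb_lin {X : Banach} (T : X -> X) c v n :
  is_linear X T -> T (lincomb X c v n) = lincomb X c (fun i => T (v i)) n.
Proof. intros HL. induction n; simpl. apply lin0; auto. rewrite (proj1 HL), (proj2 HL), IHn; auto. Qed.

Lemma lincomb_in {X : Banach} (E : X -> Prop) c v n :
  is_subspace X E -> (forall i, E (v i)) -> E (lincomb X c v n).
Proof. intros HE Hv. induction n; simpl. apply HE. apply HE; auto. apply HE; auto. Qed.

Lemma orbit_indep {X : Banach} (T Tinv : X -> X) Em Ep x0 :
  in_Laut X T Tinv -> generalized_hyperbolic_split X T Tinv Em Ep ->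
  E0 X T Em Ep x0 -> x0 <> bzero -> forall n, lin_indep X (fun i => Nat.iter i T x0) n.
Proof.
  intros HL HG [Hx0m Hx0p] Hx0. pose proof HL as [LT [_ [LTi [_ [HTT HTiT]]]]].
  pose proof HG as [[HEm HEmc] [[HEp HEpc] [Hi [Hcov [HTp [HTm [Cp Cm]]]]]]].
  intros n. induction n; intros c Hc i Hi'. exfalso; inversion Hi'.
  rewrite lincomb_shift in Hc. simpl in Hc.
  set (W := lincomb X (fun i => c (S i)) (fun i => Nat.iter (S i) T x0) n) in Hc.
  assert (HW : Ep W).
  { apply lincomb_in; auto. intros j. rewrite iter_S'. generalize (T x0) Hx0p. clear -HTp.
    induction j; intros y Hy; auto. rewrite iterS; auto. }
  apply opp_uniq in Hc.
  assert (H0 : bscal (c 0%nat) x0 = bzero).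
  { apply Hi. apply HEm; auto. rewrite <- (oppK (bscal (c 0%nat) x0)), <- Hc, <- scalN1. apply HEp; auto. }
  assert (Hc0 : c 0%nat = 0).
  { destruct (Req_dec (c 0%nat) 0); auto. exfalso. apply Hx0. rewrite <- (bscal_inv (c 0%nat) x0), H0 by auto.
    apply scalv0. }
  rewrite H0, opp0 in Hc.
  assert (HW0 : lincomb X (fun i => c (S i)) (fun i => Nat.iter i T x0) n = bzero).
  { unfold W in Hc. rewrite <- (HTiT (lincomb _ _ _ _)), (lincomb_lin T) by auto.
    rewrite Hc. apply lin0; auto. }
  destruct i. auto. apply (IHn _ HW0). lia.
Qed.

Arguments closure : clear implicits.
Arguments span : clear implicits.
Arguments bsub : clear implicits.

Theorem theorem3 (X : Banach) (T Tinv : X -> X) (Em Ep : X -> Prop) :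
  in_Laut X T Tinv ->
  shifted_hyperbolic_split X T Tinv Em Ep ->
  is_closed_subspace X (closure X (BT X T Tinv)) /\
  infinite_dimensional X (closure X (BT X T Tinv)) /\
  (forall x, closure X (BT X T Tinv) x <-> Sigma X T Tinv Em Ep x).
Proof.
  intros HL [HG [x0 [Hx0 Hx0n]]].
  assert (Heq : forall x, closure X (BT X T Tinv) x <-> Sigma X T Tinv Em Ep x).
  { intros x. unfold Sigma. split.
    - intros Hx. apply cl_idem. apply (cl_mono (BT X T Tinv)); auto.
      intros y Hy. apply (cl_mono (span X (Gp T Tinv Em Ep))). intros z Hz.
      apply (span_mono (Gp T Tinv Em Ep)); auto. intros w Hw; apply G_iff; auto.
      apply (BT_Sig T Tinv Em Ep); auto.
    - intros Hx. apply (cl_mono (span X (fun y => exists (n : Z) (x : X), E0 X T Em Ep x /\ y = zpow X T Tinv n x))); auto.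
      intros y Hy. apply Conv_BT. apply (span_Conv T Tinv Em Ep); auto.
      apply (span_mono (fun y => exists (n : Z) (x : X), E0 X T Em Ep x /\ y = zpow X T Tinv n x)); auto.
      intros w Hw; apply G_iff; auto. }
  split; [|split; auto].
  - split; [|apply cl_closed].
    assert (HS : is_subspace X (Sigma X T Tinv Em Ep)) by (apply subspace_cl, subspace_span).
    destruct HS as [H0 [Ha Hs]]. split; [|split]; intros; apply Heq.
    + auto.
    + apply Ha; apply Heq; auto.
    + apply Hs; apply Heq; auto.
  - intros n. exists (fun i => Nat.iter i T x0). split.
    + intros i _. apply cl_incl. apply Conv_BT. apply (span_Conv T Tinv Em Ep); auto.
      apply span_in. exists i, x0. auto.
    + apply (orbit_indep T Tinv Em Ep); auto.
Qed.
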